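(* Let $i\ge 1$ be an integer and let $H$ be a weighted graph. Let $B_1,B_2,P$ be sets of vertices of $H$ such that $d(B_1,B_2)\ge 2i+2$ and $H[P]$ is connected. If both $N^i[B_1\cup P]$ and $N^i[B_2\cup P]$ are weighted bipartite, then $N^i[B_1\cup B_2\cup P]$ is weighted bipartite.
   Context: A weighted graph is a graph with a weight function $\omega:E(H)\to\mathbb{N}$; the weight of a subgraph is the sum of its edge weights. $d(B_1,B_2)$ is the unweighted distance, i.e. the minimum number of edges of a path between a vertex of $B_1$ and a vertex of $B_2$. $N^i[S]$ is the set of vertices at unweighted distance at most $i$ from some vertex of $S$. A vertex set $S$ is weighted bipartite if $H[S]$ contains no cycle of odd weight. *)

(* Defs.v *)
(* Finite simple graphs: vertex type T : finType,
   adjacency e : rel T (symmetric, irreflexive), edge weights w : T -> T -> nat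
   (symmetric, so it is a function on the unordered edges; only its values on
   edges matter). *)
From mathcomp Require Import all_boot.
Set Implicit Arguments. Unset Strict Implicit. Unset Printing Implicit Defensive.

Section Graphs.
Variable T : finType.
Variable e : rel T.

(* a walk from x to y with at most k edges *)
Definition within (k : nat) (x y : T) : bool :=
  [exists m : 'I_k.+1, [exists p : k.-tuple T,
     path e x (take m p) && (last x (take m p) == y)]].

Definition nbhd (k : nat) (S : {set T}) : {set T} :=
  [set v | [exists u in S, within k u v]].

Definition dist_ge (k : nat) (B1 B2 : {set T}) : Prop :=
  forall x y, x \in B1 -> y \in B2 -> forall m, m < k -> ~~ within m x y.

Definition induced (S : {set T}) : rel T :=
  [rel x y | [&& e x y, x \in S & y \in S]].

Definition induced_connected (S : {set T}) : Prop :=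
  forall x y, x \in S -> y \in S -> connect (induced S) x y.

Variable w : T -> T -> nat.

(* the cycle x :: p (closing edge from last vertex back to x) in H[S]:
   at least 3 distinct vertices, consecutive ones adjacent in H[S] *)
Definition is_cycle_in (S : {set T}) (x : T) (p : seq T) : Prop :=
  [/\ 2 <= size p, uniq (x :: p) & path (induced S) x (rcons p x)].

Definition cycle_weight (x : T) (p : seq T) : nat :=
  sumn (pairmap w x (rcons p x)).

Definition weighted_bipartite (S : {set T}) : Prop :=
  forall x p, is_cycle_in S x p -> ~~ odd (cycle_weight x p).

End Graphs.

(* Main.v *)
Require Import Defs.
From mathcomp Require Import all_boot zify.
Set Implicit Arguments. Unset Strict Implicit. Unset Printing Implicit Defensive.


Section Aux.
Variables (T : finType) (e : rel T) (w : T -> T -> nat).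
Hypotheses (e_sym : symmetric e) (e_irr : irreflexive e)
  (w_sym : forall x y, w x y = w y x).

Definition W x p := sumn (pairmap w x p).

Lemma W_cat x p1 p2 : W x (p1 ++ p2) = W x p1 + W (last x p1) p2.
Proof. by rewrite /W pairmap_cat sumn_cat. Qed.

Lemma dup_split (q : seq T) (x : T) : ~~ uniq (x :: q) ->
  exists a b c y, [/\ q = a ++ b ++ c, last x a = y, last y b = y & b != [::]].
Proof.
elim: q x => [|z q IH] x /=; first by [].
rewrite negb_and negbK.
case/orP.
  rewrite inE; case/orP.
    move/eqP=> <-; exists [::], [::x], q, x; split => //.
  move=> xq; case/splitPr: xq => q1 q2.
  exists [::], (z :: rcons q1 x), q2, x; split => //=.
    by rewrite cat_rcons.
  by rewrite last_rcons.
move/IH=> [a [b [c [y [-> ha hb bn]]]]].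
by exists (z :: a), b, c, y; split.
Qed.

Lemma closed_even (S : {set T}) : weighted_bipartite e w S ->
  forall x p, path (induced e S) x p -> last x p = x -> ~~ odd (W x p).
Proof.
move=> wb x p.
have [n] := ubnP (size p); elim: n x p => [|n IH] x p //.
case/lastP: p => [|q z] Hs; first by rewrite /W.
rewrite last_rcons => Hp Hz; subst z.
case Hu: (uniq (x :: q)).
  case: q Hu Hs Hp => [|z1 [|z2 q]] Hu Hs Hp.
  - by move: Hp => /= /andP [/andP [Hxx _] _]; rewrite e_irr in Hxx.
  - by rewrite /W /= addn0 w_sym addnn odd_double.
  - have := (wb x [:: z1, z2 & q]). rewrite /cycle_weight /W. apply. by split.
have [a [b [c [y [Hq ha hb bn]]]]] := dup_split (negbT Hu).
move: Hs Hp; rewrite Hq rcons_cat rcons_cat => Hs.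
rewrite cat_path cat_path ha hb => /and3P [p1 p2 p3].
rewrite W_cat W_cat ha hb.
have hb0 : 0 < size b by case: (b) bn.
rewrite !size_cat !size_rcons in Hs.
have Hy : ~~ odd (W y b).
  by apply: IH => //; lia.
have Hr : ~~ odd (W x (a ++ rcons c x)).
  apply: IH.
  - rewrite size_cat size_rcons; lia.
  - by rewrite cat_path ha p1 p3.
  - by rewrite last_cat last_rcons.
move: Hr; rewrite W_cat ha !oddD.
by move: Hy; case: (odd (W y b)); case: (odd (W x a)); case: (odd (W y (rcons c x))).
Qed.
End Aux.



Section Aux2.
Variables (T : finType) (e : rel T).
Hypotheses (e_sym : symmetric e).

Lemma within_intro k x y p : size p <= k -> path e x p -> last x p = y -> within e k x y.
Proof.
move=> Hs Hp Hl.
have Hk : size (take k (p ++ nseq k x)) == k.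
  by rewrite size_take size_cat size_nseq; case: ifP => //; lia.
apply/existsP; exists (Ordinal (Hs : size p < k.+1)); apply/existsP.
exists (Tuple Hk) => /=.
by rewrite take_takel // take_size_cat // Hp Hl eqxx.
Qed.

Lemma within_elim k x y : within e k x y ->
  exists p, [/\ size p <= k, path e x p & last x p = y].
Proof.
case/existsP => m /existsP [t /andP [Hp /eqP Hl]].
exists (take m t); split => //.
rewrite size_take_min size_tuple; have := ltn_ord m; lia.
Qed.

Lemma within_cat j k x y z : within e j x y -> within e k y z -> within e (j + k) x z.
Proof.
move=> /within_elim [p [Hs Hp Hl]] /within_elim [q [Hs' Hq Hl']].
apply: (@within_intro _ _ _ (p ++ q)).
- rewrite size_cat; lia.
- by rewrite cat_path Hp Hl Hq.
- by rewrite last_cat Hl.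
Qed.

Lemma within_rev k x y : within e k x y -> within e k y x.
Proof.
move=> /within_elim [p [Hs Hp Hl]].
apply: (@within_intro _ _ _ (rev (belast x p))).
- by rewrite size_rev size_belast.
- rewrite -Hl rev_path (@eq_path _ _ e) // => a b /=; exact: e_sym.
- by rewrite -Hl; case: p {Hs Hp Hl} => //= a p; rewrite rev_cons last_rcons.
Qed.

Lemma within_mono j k x y : j <= k -> within e j x y -> within e k x y.
Proof.
move=> Hjk /within_elim [p [Hs Hp Hl]].
apply: (@within_intro _ _ _ p) => //; lia.
Qed.

Lemma within_edge x y : e x y -> within e 1 x y.
Proof. by move=> Hxy; apply: (@within_intro _ _ _ [:: y]) => //=; rewrite Hxy. Qed.

Lemma within0 x : within e 0 x x.
Proof. exact: (@within_intro _ _ _ [::]). Qed.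

Lemma in_nbhd k S v : (v \in nbhd e k S) = [exists u in S, within e k u v].
Proof. by rewrite inE. Qed.

Lemma nbhdU k A B v : (v \in nbhd e k (A :|: B)) = (v \in nbhd e k A) || (v \in nbhd e k B).
Proof.
rewrite !in_nbhd; apply/existsP/orP.
- case=> u /andP []; rewrite inE => /orP [] Hu Hw.
  + by left; apply/existsP; exists u; rewrite Hu.
  + by right; apply/existsP; exists u; rewrite Hu.
- case=> /existsP [u /andP [Hu Hw]]; exists u; by rewrite inE Hu ?orbT.
Qed.

End Aux2.



Section Paths.
Variables (T : finType) (e : rel T).

Lemma path_all (A : {set T}) x s : path (induced e A) x s -> all (mem A) s.
Proof. by elim: s x => //= y s IH x /andP [/and3P [_ _ ->] /IH]. Qed.

Lemma path_start (A : {set T}) x s : path (induced e A) x s -> s != [::] -> x \in A.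
Proof. by case: s => //= y s /andP [/and3P [_ -> _]]. Qed.

Lemma path_restrict (A A' : {set T}) x s : path (induced e A) x s -> x \in A' ->
  all (mem A') s -> path (induced e A') x s.
Proof.
elim: s x => //= y s IH x /andP [/and3P [Hxy _ _] Hp] Hx /andP [Hy Hs].
by rewrite {1}/induced /= Hxy Hx Hy /=; apply: IH.
Qed.

Lemma path_sub (A A' : {set T}) x s : {subset A <= A'} ->
  path (induced e A) x s -> path (induced e A') x s.
Proof.
move=> sub; elim: s x => //= y s IH x /andP [/and3P [Hxy Hx Hy] Hp].
by rewrite {1}/induced /= Hxy (sub _ Hx) (sub _ Hy) /=; apply: IH.
Qed.
End Paths.

Section Main.
Variables (T : finType) (e : rel T) (w : T -> T -> nat).
Hypotheses (e_sym : symmetric e) (e_irr : irreflexive e)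
  (w_sym : forall x y, w x y = w y x).
Variables (i : nat) (B1 B2 P : {set T}).
Hypotheses (Hd : dist_ge e (2 * i + 2) B1 B2) (Hc : induced_connected e P).

Local Notation N := (nbhd e i P).
Local Notation S1 := (nbhd e i (B1 :|: P)).
Local Notation S2 := (nbhd e i (B2 :|: P)).
Local Notation S := (nbhd e i (B1 :|: B2 :|: P)).
Local Notation N1 := (nbhd e i B1).
Local Notation N2 := (nbhd e i B2).

Lemma memS v : (v \in S) = [|| v \in N1, v \in N2 | v \in N].
Proof. by rewrite !nbhdU orbA. Qed.
Lemma memS1 v : (v \in S1) = (v \in N1) || (v \in N).
Proof. by rewrite !nbhdU. Qed.
Lemma memS2 v : (v \in S2) = (v \in N2) || (v \in N).
Proof. by rewrite !nbhdU. Qed.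

Lemma subNS1 : {subset N <= S1}. Proof. by move=> v; rewrite memS1 => ->; rewrite orbT. Qed.
Lemma subNS2 : {subset N <= S2}. Proof. by move=> v; rewrite memS2 => ->; rewrite orbT. Qed.
Lemma subNS : {subset N <= S}. Proof. by move=> v; rewrite memS => ->; rewrite !orbT. Qed.
Lemma subS1S : {subset S1 <= S}.
Proof. by move=> v; rewrite memS1 memS => /orP [] ->; rewrite ?orbT. Qed.
Lemma subS2S : {subset S2 <= S}.
Proof. by move=> v; rewrite memS2 memS => /orP [] ->; rewrite ?orbT. Qed.

Lemma no_cross u v : u \in N1 -> v \in N2 -> e u v -> False.
Proof.
rewrite !in_nbhd => /existsP [b1 /andP [Hb1 H1]] /existsP [b2 /andP [Hb2 H2]] Huv.
have H : within e (i + (1 + i)) b1 b2.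
  apply: within_cat H1 _; apply: within_cat (within_edge Huv) _.
  exact: within_rev.
have := Hd Hb1 Hb2 (_ : i + (1 + i) < 2 * i + 2).
by move=> /(_ ltac:(lia)); rewrite H.
Qed.

Lemma prop2 u v : u \in N2 -> e u v -> v \in S -> v \notin N -> v \in N2.
Proof.
move=> Hu Huv; rewrite memS => /or3P [] // Hv; last by rewrite Hv.
by case: (no_cross Hv Hu); rewrite e_sym.
Qed.

Lemma prop1 u v : u \in N1 -> e u v -> v \in S -> v \notin N -> v \in N1.
Proof.
move=> Hu Huv; rewrite memS => /or3P [] // Hv; last by rewrite Hv.
by case: (no_cross Hu Hv).
Qed.

Lemma path_prop2 s u : u \in N2 -> path (induced e S) u s ->
  all (fun v => v \notin N) s -> all (mem N2) s.
Proof.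
elim: s u => //= v s IH u Hu /andP [/and3P [Huv _ Hv] Hp] /andP [HvN Hs].
have Hv2 := prop2 Hu Huv Hv HvN.
by apply/andP; split; [exact: Hv2 | apply: IH Hp Hs].
Qed.

Lemma path_prop1 s u : u \in N1 -> path (induced e S) u s ->
  all (fun v => v \notin N) s -> all (mem N1) s.
Proof.
elim: s u => //= v s IH u Hu /andP [/and3P [Huv _ Hv] Hp] /andP [HvN Hs].
have Hv1 := prop1 Hu Huv Hv HvN.
by apply/andP; split; [exact: Hv1 | apply: IH Hp Hs].
Qed.

Lemma nbhd_path s x y0 j : y0 \in P -> within e j y0 x -> path e x s ->
  j + size s <= i -> path (induced e N) x s.
Proof.
elim: s x j => //= z s IH x j Hy0 Hw /andP [Hxz Hp] Hs.
have Hwz : within e (j + 1) y0 z := within_cat Hw (within_edge Hxz).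
rewrite {1}/induced /= Hxz /=; apply/andP; split; [apply/andP; split|].
- rewrite in_nbhd; apply/existsP; exists y0; rewrite Hy0 /=.
  by apply: within_mono Hw; timeout 20 lia.
- rewrite in_nbhd; apply/existsP; exists y0; rewrite Hy0 /=.
  by apply: within_mono Hwz; timeout 20 lia.
- by apply: (IH z (j + 1)) => //; timeout 20 lia.
Qed.

Lemma induced_sym (A : {set T}) : symmetric (induced e A).
Proof. by move=> x y; rewrite /induced /= e_sym; case: (x \in A); case: (y \in A); rewrite ?andbF. Qed.

Lemma conn_to_P a : a \in N -> exists2 p0, p0 \in P & connect (induced e N) p0 a.
Proof.
rewrite in_nbhd => /existsP [p0 /andP [Hp0 Hw]].
exists p0 => //.
case/within_elim: Hw => p [Hs Hp Hl].
apply/connectP; exists p => //.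
by apply: (@nbhd_path _ _ p0 0) => //; exact: within0.
Qed.

Lemma N_conn a b : a \in N -> b \in N ->
  exists q, path (induced e N) a q /\ last a q = b.
Proof.
move=> Ha Hb.
have Hsym := sym_connect_sym (induced_sym N).
have [p0 Hp0 C0] := conn_to_P Ha.
have [p1 Hp1 C1] := conn_to_P Hb.
have C01 : connect (induced e N) p0 p1.
  apply: (connect_sub _ (Hc Hp0 Hp1)) => x y /and3P [Hxy Hx Hy].
  apply: connect1; rewrite /induced /= Hxy /=; apply/andP; split;
  rewrite in_nbhd; apply/existsP; [exists x; rewrite Hx | exists y; rewrite Hy] => /=;
  apply: (within_mono (leq0n i)); exact: within0.
have : connect (induced e N) a b.
  apply: connect_trans C1; apply: connect_trans C01.
  by rewrite Hsym.
by case/connectP => q Hq Hl; exists q.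
Qed.

Hypotheses (wb1 : weighted_bipartite e w S1) (wb2 : weighted_bipartite e w S2).

Lemma allS1_of (s : seq T) : ~~ has (fun v => v \notin S1) s -> all (mem S1) s.
Proof.
rewrite -all_predC; apply: sub_all => v /=; by rewrite negbK.
Qed.

Lemma count0_of (a : pred T) (s : seq T) : ~~ has a s -> count a s = 0.
Proof. by rewrite has_count lt0n negbK => /eqP. Qed.

Lemma par4 A X Y Q C : ~~ odd (X + Q) -> ~~ odd (Y + Q) -> ~~ odd (A + (Y + C)) ->
  ~~ odd (A + (X + C)).
Proof.
rewrite !oddD.
by case: (odd A); case: (odd X); case: (odd Y); case: (odd Q); case: (odd C).
Qed.

Lemma mainN n : forall x p, x \in N -> count (fun v => v \notin S1) p < n ->
  path (induced e S) x p -> last x p = x -> ~~ odd (W w x p).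
Proof.
elim: n => [|n IH] x p HxN // Hcn Hp Hl.
case Hh: (has (fun v => v \notin S1) p); last first.
  apply: (closed_even e_irr w_sym wb1) Hl.
  apply: path_restrict Hp (subNS1 HxN) _.
  by apply: allS1_of; rewrite Hh.
case: (split_find Hh) Hp Hl Hcn => z s1 s2 Hz Hs1 Hp Hl Hcn.
move: Hp; rewrite cat_path rcons_path last_rcons => /andP [/andP [Hp1 Hedge] Hp2].
move: Hl; rewrite last_cat last_rcons => Hl.
set a := last x s1 in Hedge |- *.
have Ea : last x s1 = a by [].
have Hall1 := allS1_of Hs1.
have Ha1 : a \in S1.
  have := mem_last x s1; rewrite -/a in_cons => /orP [/eqP -> | Ha].
  - exact: subNS1.
  - exact: (allP Hall1).
case/and3P: Hedge => Haz HaS HzS.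
have Hz2 : z \in N2.
  move: HzS; rewrite memS => /or3P [] // H.
  - by move: Hz; rewrite memS1 H.
  - by move: Hz; rewrite memS1 H orbT.
have HaN : a \in N.
  move: Ha1; rewrite memS1 => /orP [] // H.
  by case: (no_cross H Hz2 Haz).
have HzN : z \notin N by apply: contra Hz; exact: subNS1.
have Hh2 : has (mem N) s2.
  apply/hasP; exists x => //.
  have := mem_last z s2; rewrite Hl in_cons => /orP [/eqP Exz | //].
  by move: HzN; rewrite -Exz HxN.
case: (split_find Hh2) Hp2 Hl Hcn => b r1 r2 Hb Hr1 Hp2 Hl Hcn.
move: Hp2; rewrite cat_path rcons_path last_rcons => /andP [/andP [Hpr1 Hedge2] Hpr2].
move: Hl; rewrite last_cat last_rcons => Hl.
have Hexc : path (induced e S2) a (z :: rcons r1 b).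
  apply: (@path_restrict _ _ S).
  - change (induced e S a z && path (induced e S) z (rcons r1 b)).
    by rewrite rcons_path Hpr1 Hedge2 /induced /= Haz HaS HzS.
  - exact: subNS2.
  - rewrite /= all_rcons; apply/and3P; split.
    + by rewrite memS2 Hz2.
    + exact: subNS2.
    + have : all (mem N2) r1.
        apply: path_prop2 Hz2 Hpr1 _.
        by rewrite -all_predC in Hr1; move: Hr1; apply: sub_all.
      by apply: sub_all => v /= Hv; rewrite memS2 Hv.
have [q [Hq Hql]] := N_conn HaN Hb.
have [q' [Hq' Hql']] := N_conn Hb HaN.
have Lb : last a (z :: rcons r1 b) = b by rewrite /= last_rcons.
have E1 : ~~ odd (W w a ((z :: rcons r1 b) ++ q')).
  apply: (closed_even e_irr w_sym wb2).
  - by rewrite cat_path Hexc Lb (path_sub subNS2 Hq').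
  - by rewrite last_cat Lb.
have E2 : ~~ odd (W w a (q ++ q')).
  apply: (closed_even e_irr w_sym wb1).
  - by rewrite cat_path (path_sub subNS1 Hq) Hql (path_sub subNS1 Hq').
  - by rewrite last_cat Hql.
have E3 : ~~ odd (W w x (s1 ++ q ++ r2)).
  apply: IH => //.
  - rewrite -!cats1 !count_cat (count0_of Hs1) /= Hz in Hcn.
    rewrite !count_cat (count0_of Hs1).
    have -> : count (fun v => v \notin S1) q = 0.
      apply: count0_of; rewrite -all_predC.
      apply: sub_all (path_all Hq) => v /= Hv; rewrite negbK; exact: subNS1.
    move: Hcn; move: (count _ r1) (count _ r2) (b \notin S1) => c1 c2 bb /= H; clear -H; timeout 20 lia.
  - rewrite cat_path Hp1 Ea cat_path (path_sub subNS Hq) Hql Hpr2 //.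
  - by rewrite last_cat last_cat Ea Hql.
rewrite cat_rcons W_cat Ea -cat_cons W_cat Lb.
rewrite W_cat Lb in E1; rewrite W_cat Hql in E2; rewrite W_cat Ea W_cat Hql in E3.
exact: par4 E1 E2 E3.
Qed.

Lemma mainAll x p : path (induced e S) x p -> last x p = x -> ~~ odd (W w x p).
Proof.
move=> Hp Hl.
case HxN: (x \in N).
  by apply: (mainN (n := (count (fun v => v \notin S1) p).+1)).
case: p Hp Hl => [|y0 p0] Hp Hl; first by rewrite /W.
set p := y0 :: p0 in Hp Hl |- *.
case Hh: (has (mem N) p).
  case/hasP: Hh => y Hy HyN.
  case/splitPr: Hy Hp Hl => p1 p2 Hp Hl.
  move: Hp; rewrite cat_path /= => /andP [Hp1 /andP [Hedge Hp2]].
  move: Hl; rewrite last_cat /= => Hl.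
  have Eq : W w x (p1 ++ y :: p2) = W w y (p2 ++ rcons p1 y).
    rewrite W_cat W_cat Hl -cats1 W_cat.
    rewrite (_ : y :: p2 = [:: y] ++ p2) // W_cat /=.
    move: (W w x p1) (W w (last x p1) [:: y]) (W w y p2) => u1 u2 u3; clear; lia.
  rewrite Eq.
  apply: (mainN (n := (count (fun v => v \notin S1) (p2 ++ rcons p1 y)).+1)) => //.
  - by rewrite cat_path Hp2 Hl rcons_path Hp1 Hedge.
  - by rewrite last_cat last_rcons.
have HnN : all (fun v => v \notin N) p.
  by move: (negbT Hh); rewrite -all_predC; apply: sub_all.
have HxS : x \in S by apply: (path_start Hp).
have Hp' := Hp.
move: HxS; rewrite memS => /or3P [] H; last by rewrite H in HxN.
- apply: (closed_even e_irr w_sym wb1) Hl.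
  apply: path_restrict Hp _ _; first by rewrite memS1 H.
  by apply: sub_all (path_prop1 H Hp' HnN) => v /= Hv; rewrite memS1 Hv.
- apply: (closed_even e_irr w_sym wb2) Hl.
  apply: path_restrict Hp _ _; first by rewrite memS2 H.
  by apply: sub_all (path_prop2 H Hp' HnN) => v /= Hv; rewrite memS2 Hv.
Qed.

End Main.


Theorem lemma4p3 (T : finType) (e : rel T) (w : T -> T -> nat)
  (e_sym : symmetric e) (e_irr : irreflexive e)
  (w_sym : forall x y, w x y = w y x)
  (i : nat) (hi : 1 <= i) (B1 B2 P : {set T}) :
  dist_ge e (2 * i + 2) B1 B2 ->
  induced_connected e P ->
  weighted_bipartite e w (nbhd e i (B1 :|: P)) ->
  weighted_bipartite e w (nbhd e i (B2 :|: P)) ->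
  weighted_bipartite e w (nbhd e i (B1 :|: B2 :|: P)).
Proof.
move=> Hd Hc wb1 wb2 x p [Hs Hu Hp].
rewrite /cycle_weight.
have := mainAll e_sym e_irr w_sym Hd Hc wb1 wb2 Hp (last_rcons _ _ _).
by [].
Qed.
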